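(* Let $\Gamma$ be a finite connected tetravalent $G$-half-arc-transitive graph, $G\leq\mathrm{Aut}(\Gamma)$. Then $G$ has a normal subgroup $N$ such that $\Gamma_N$ is a tetravalent basic $G/N$-half-arc-transitive graph.
   Context: $\Gamma$ is $G$-half-arc-transitive if $G$ is transitive on vertices and edges but not on arcs. For $N\trianglelefteq G$, the normal quotient $\Gamma_N$ has as vertices the $N$-orbits on $V(\Gamma)$, two distinct orbits adjacent iff some edge of $\Gamma$ joins them; $G/N$ acts on it when $N$ is the kernel of the action. A connected tetravalent $X$-half-arc-transitive graph $\Sigma$ is basic (for $X$) if $\Sigma_M$ has valency at most 2 for every non-trivial normal subgroup $M$ of $X$. *)

(* Defs.v *)
From mathcomp Require Import all_boot all_fingroup.
Local Open Scope group_scope.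
Set Implicit Arguments. Unset Strict Implicit. Unset Printing Implicit Defensive.

(* A graph is given by a vertex set V : {set T} on a finType T and an
   adjacency relation e : rel T (only used between vertices of V).
   A group X acts on it through an action [to] of a group on T. *)
Definition nbhd {T : finType} (V : {set T}) (e : rel T) (x : T) : {set T} := [set y in V | e x y].

Section Graphs.
Variables (aT : finGroupType) (D : {set aT}) (T : finType) (to : action D T).

Definition regular_of (V : {set T}) (e : rel T) (k : nat) :=
  forall x, x \in V -> #|nbhd V e x| = k.

Definition gconnected (V : {set T}) (e : rel T) :=
  forall x y, x \in V -> y \in V ->
    connect [rel u v | [&& u \in V, v \in V & e u v]] x y.

Definition gedges (V : {set T}) (e : rel T) : {set {set T}} :=
  [set [set x; y] | x in V, y in V & e x y].

Definition acts_by_auts (X : {set aT}) (V : {set T}) (e : rel T) :=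
  [/\ X \subset D, [acts X, on V | to] &
      forall g u v, g \in X -> u \in V -> v \in V -> e (to u g) (to v g) = e u v].

Definition arc_transitive (X : {set aT}) (V : {set T}) (e : rel T) :=
  forall u v u' v', u \in V -> v \in V -> e u v -> u' \in V -> v' \in V -> e u' v' ->
    exists2 g, g \in X & to u g = u' /\ to v g = v'.

Definition half_arc_transitive (X : {set aT}) (V : {set T}) (e : rel T) :=
  [/\ acts_by_auts X V e, [transitive X, on V | to],
      [transitive X, on gedges V e | to^*] & ~ arc_transitive X V e].

Definition nquot_vertices (M : {set aT}) (V : {set T}) : {set {set T}} :=
  [set orbit to M x | x in V].

Definition nquot_rel (e : rel T) : rel {set T} :=
  fun B C : {set T} => (B != C) && [exists x in B, exists y in C, e x y].

Definition basic (X : {group aT}) (V : {set T}) (e : rel T) :=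
  [/\ gconnected V e, regular_of V e 4, half_arc_transitive X V e &
      forall M : {group aT}, M <| X -> M :!=: 1 ->
        forall B, B \in nquot_vertices M V ->
          #|nbhd (nquot_vertices M V) (nquot_rel e) B| <= 2].

End Graphs.

(* Main.v *)
Require Import Defs.
From mathcomp Require Import all_boot all_fingroup zify.
Set Implicit Arguments. Unset Strict Implicit. Unset Printing Implicit Defensive.
Local Open Scope group_scope.

Lemma card_sum (T : finType) (S : {set T}) (P : pred T) :
  #|[set y in S | P y]| = (\sum_(y in S) (P y : nat))%N.
Proof.
rewrite -sum1_card big_mkcond [RHS]big_mkcond /=; apply: eq_bigr => y _.
by rewrite inE; case: (y \in S); case: (P y).
Qed.

Lemma count_rel (T : finType) (S : {set T}) (R : rel T) a b :
  S != set0 ->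
  (forall x, x \in S -> #|[set y in S | R x y]| = a) ->
  (forall y, y \in S -> #|[set x in S | R x y]| = b) -> a = b.
Proof.
move=> /set0Pn[z zS] Ha Hb.
have E1 : (\sum_(x in S) \sum_(y in S) (R x y : nat) = #|S| * a)%N.
  rewrite -sum_nat_const; apply: eq_bigr => x xS.
  by rewrite -(Ha x xS) card_sum.
have E2 : (\sum_(y in S) \sum_(x in S) (R x y : nat) = #|S| * b)%N.
  rewrite -sum_nat_const; apply: eq_bigr => y yS.
  by rewrite -(Hb y yS) card_sum.
rewrite exchange_big E2 in E1.
have S0 : (0 < #|S|)%N by apply/card_gt0P; exists z.
by apply/eqP; rewrite -(eqn_pmul2l S0) E1.
Qed.

Section S.
Variables (V : finType) (e : rel V) (G : {group {perm V}}).
Hypotheses (esym : symmetric e) (eirr : irreflexive e)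
  (conn : gconnected [set: V] e) (reg4 : regular_of [set: V] e 4)
  (hat : half_arc_transitive 'P G [set: V] e).
Variables (x0 y0 : V).
Hypothesis e0 : e x0 y0.

Lemma autG g u v : g \in G -> e (g u) (g v) = e u v.
Proof. by case: hat => [[_ _ H] _ _ _] Gg; apply: H; rewrite ?inE. Qed.

Lemma transG x y : exists2 g, g \in G & g x = y.
Proof.
case: hat => _ /atransP2 H _ _.
by have [g Gg ->] := H x y (in_setT _) (in_setT _); exists g.
Qed.

Definition arcs := [set (g x0, g y0) | g : {perm V} in G].
Definition arc u v := (u, v) \in arcs.

Lemma arcP u v : reflect (exists2 g, g \in G & u = g x0 /\ v = g y0) (arc u v).
Proof.
apply: (iffP imsetP) => [[g Gg [-> ->]] | [g Gg [-> ->]]]; by exists g.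
Qed.

Lemma arc_e u v : arc u v -> e u v.
Proof. by case/arcP=> g Gg [-> ->]; rewrite autG. Qed.

Lemma arcG g u v : g \in G -> arc u v -> arc (g u) (g v).
Proof.
move=> Gg /arcP[h Gh [-> ->]]; apply/arcP; exists (h * g); first by rewrite groupM.
by rewrite !permM.
Qed.

Lemma arc_trans u v u' v' : arc u v -> arc u' v' ->
  exists2 g, g \in G & g u = u' /\ g v = v'.
Proof.
case/arcP=> h Gh [-> ->] /arcP[k Gk [-> ->]].
exists (h^-1 * k); first by rewrite groupM ?groupV.
rewrite !permM !permK. by [].
Qed.

Lemma edge_arc u v : e u v -> arc u v || arc v u.
Proof.
move=> euv; case: hat => _ _ /atransP2 H _.
have E1 : [set x0; y0] \in gedges [set: V] e by apply/imset2P; exists x0 y0; rewrite ?inE.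
have E2 : [set u; v] \in gedges [set: V] e by apply/imset2P; exists u v; rewrite ?inE.
have [g Gg] := H _ _ E1 E2.
rewrite /= /setact /= imsetU1 imset_set1 /= /aperm => E.
have : u \in [set u; v] by rewrite !inE eqxx.
have : v \in [set u; v] by rewrite !inE eqxx orbT.
rewrite E !inE => /orP[] /eqP Hv /orP[] /eqP Hu; rewrite Hu Hv in euv *.
- by rewrite eirr in euv.
- by apply/orP; right; apply/arcP; exists g.
- by apply/orP; left; apply/arcP; exists g.
- by rewrite eirr in euv.
Qed.

Lemma arc_asym u v : arc u v -> arc v u -> False.
Proof.
move=> auv avu; case: hat => _ _ _; apply.
have allarc a b : e a b -> arc a b.
  move=> eab; case/orP: (edge_arc eab) => // aba.
  have [h Gh [hu hv]] := arc_trans auv aba.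
  by rewrite -hu -hv; apply: arcG.
move=> u1 v1 u2 v2 _ _ /allarc a1 _ _ /allarc a2.
have [g Gg [g1 g2]] := arc_trans a1 a2; by exists g.
Qed.

Lemma arc_irr u : arc u u = false.
Proof. by apply/negbTE/negP => /arc_e; rewrite eirr. Qed.

Definition Out x := [set y | arc x y].
Definition In x := [set y | arc y x].

Lemma nbhdE x : nbhd [set: V] e x = Out x :|: In x.
Proof.
apply/setP=> y; rewrite !inE; apply/idP/idP.
  by move/edge_arc.
by case/orP => /arc_e //; rewrite esym.
Qed.

Lemma OutIn x : [disjoint Out x & In x].
Proof.
by apply/pred0P => y /=; rewrite !inE; apply/negbTE/negP => /andP[a b]; apply: (arc_asym a b).
Qed.

Lemma OutG g x : g \in G -> Out (g x) = g @: Out x.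
Proof.
move=> Gg; apply/setP=> y; rewrite inE; apply/idP/imsetP.
  move=> a; exists (g^-1 y); last by rewrite permKV.
  by rewrite inE; have := arcG (groupVr Gg) a; rewrite permK.
by case=> z; rewrite inE => a ->; apply: arcG.
Qed.

Lemma InG g x : g \in G -> In (g x) = g @: In x.
Proof.
move=> Gg; apply/setP=> y; rewrite inE; apply/idP/imsetP.
  move=> a; exists (g^-1 y); last by rewrite permKV.
  by rewrite inE; have := arcG (groupVr Gg) a; rewrite permK.
by case=> z; rewrite inE => a ->; apply: arcG.
Qed.

Lemma card_Out x : #|Out x| = 2.
Proof.
have cO y : #|Out y| = #|Out x|.
  have [g Gg <-] := transG x y; rewrite OutG // card_imset //; exact: perm_inj.
have cI y : #|In y| = #|In x|.
  have [g Gg <-] := transG x y; rewrite InG // card_imset //; exact: perm_inj.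
have sum4 : (#|Out x| + #|In x| = 4)%N.
  by rewrite -cardsUI (disjoint_setI0 (OutIn x)) cards0 addn0 -nbhdE reg4 ?inE.
have eq : #|Out x| = #|In x|.
  apply: (@count_rel _ [set: V] arc).
  - by apply/set0Pn; exists x; rewrite inE.
  - by move=> y _; rewrite -(cO y); apply: eq_card => z; rewrite !inE.
  - by move=> y _; rewrite -(cI y); apply: eq_card => z; rewrite !inE.
move: sum4; rewrite -eq; lia.
Qed.

Lemma card_In x : #|In x| = 2.
Proof.
have sum4 : (#|Out x| + #|In x| = 4)%N.
  by rewrite -cardsUI (disjoint_setI0 (OutIn x)) cards0 addn0 -nbhdE reg4 ?inE.
move: sum4; rewrite card_Out; lia.
Qed.

Section Quot.
Variable M : {group {perm V}}.
Hypothesis nMG : M <| G.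

Definition ob x := orbit 'P M x.
Definition SV := nquot_vertices 'P M [set: V].
Definition val x := #|nbhd SV (nquot_rel e) (ob x)|.
Definition NB x := [set ob y | y in nbhd [set: V] e x].
Definition OutQ x := [set ob y | y in Out x].
Definition InQ x := [set ob y | y in In x].

Lemma sMG : M \subset G. Proof. by case/andP: nMG. Qed.
Lemma nMG' g : g \in G -> g \in 'N(M).
Proof. by move=> Gg; case/andP: nMG => _ /subsetP; apply. Qed.

Lemma obP x y : reflect (exists2 m, m \in M & m x = y) (y \in ob x).
Proof. by apply: (iffP imsetP) => [[m Mm ->]|[m Mm <-]]; exists m. Qed.

Lemma ob_refl x : x \in ob x. Proof. exact: orbit_refl. Qed.

Lemma ob_eq x y : (ob x == ob y) = (x \in ob y).
Proof. exact: orbit_eq_mem. Qed.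

Lemma obG g x : g \in G -> 'P^*%act (ob x) g = ob (g x).
Proof.
move=> Gg; rewrite /ob /= setact_orbit.
by have /normP -> := nMG' Gg.
Qed.

Lemma ob_fix m x : m \in M -> 'P^*%act (ob x) m = ob x.
Proof.
move=> Mm; rewrite obG ?(subsetP sMG) //; apply/eqP; rewrite ob_eq.
by apply/obP; exists m.
Qed.

Lemma SVP B : reflect (exists x, B = ob x) (B \in SV).
Proof.
by apply: (iffP imsetP) => [[x _ ->]|[x ->]]; exists x.
Qed.

Lemma mem_SV x : ob x \in SV.
Proof. by apply/SVP; exists x. Qed.

Lemma nbhd_quot x : nbhd SV (nquot_rel e) (ob x) = NB x :\ ob x.
Proof.
apply/setP=> C; rewrite !inE; apply/idP/idP.
  case/andP=> /SVP[c ->] /andP[neq /existsP[u /andP[ux /existsP[w /andP[wc euw]]]]].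
  rewrite eq_sym neq /=; case/obP: ux => m Mm <-{u} in euw.
  have Gm := subsetP sMG _ Mm.
  apply/imsetP; exists (m^-1 w).
    by rewrite !inE /=; have := autG (m x) w (groupVr Gm); rewrite permK => ->.
  rewrite /ob -[m^-1 w]/('P%act w m^-1) orbit_act ?groupV //.
  by apply/orbit_eqP; rewrite orbit_sym.
case/andP=> neq /imsetP[y]; rewrite !inE /= => exy Cy; subst C.
rewrite mem_SV /nquot_rel eq_sym neq /=; apply/existsP; exists x; rewrite ob_refl /=.
by apply/existsP; exists y; rewrite ob_refl.
Qed.

Lemma NB_OutIn x : NB x = OutQ x :|: InQ x.
Proof. by rewrite /NB nbhdE imsetU. Qed.

Lemma val_le4 x : (val x <= 4)%N.
Proof.
rewrite /val nbhd_quot; apply: leq_trans (subset_leq_card (subsetDl _ _)) _.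
by apply: leq_trans (leq_imset_card _ _) _; rewrite reg4 ?inE.
Qed.

Lemma valE x : val x = (#|NB x| - (ob x \in NB x))%N.
Proof. by rewrite /val nbhd_quot (cardsD1 (ob x) (NB x)) addKn. Qed.

Lemma NBG g x : g \in G -> NB (g x) = ('P^*%act ^~ g) @: NB x.
Proof.
move=> Gg; apply/setP=> C; apply/imsetP/imsetP.
  case=> y; rewrite !inE /= => exy ->; exists (ob (g^-1 y)).
    apply/imsetP; exists (g^-1 y) => //; rewrite !inE /=.
    by have := autG (g x) y (groupVr Gg); rewrite permK => ->.
  by rewrite /= obG // permKV.
case=> B /imsetP[y]; rewrite !inE /= => exy -> ->; exists (g y).
  by rewrite !inE /= autG.
by rewrite /= obG.
Qed.

Lemma valG g x : g \in G -> val (g x) = val x.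
Proof.
move=> Gg; rewrite !valE NBG // card_imset; last exact: act_inj.
by rewrite -obG // (mem_imset _ _ (act_inj _ g)).
Qed.

Lemma val_const x y : val x = val y.
Proof. by have [g Gg <-] := transG y x; rewrite valG. Qed.


Lemma ob_act m w : m \in M -> ob (m w) = ob w.
Proof. by move=> Mm; rewrite /ob -[m w]/('P%act w m) orbit_act. Qed.

Lemma ob_mem w c : w \in ob c -> ob w = ob c.
Proof. by case/obP=> m Mm <-; rewrite ob_act. Qed.

Definition RQ (B C : {set V}) := [exists u in B, exists w in C, arc u w].

Lemma OutQE x : [set C in SV | RQ (ob x) C] = OutQ x.
Proof.
apply/setP=> C; rewrite inE; apply/idP/imsetP.
  case/andP=> /SVP[c ->] /existsP[u /andP[/obP[m Mm <-] /existsP[w /andP[wc a]]]].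
  have Gm := subsetP sMG _ Mm.
  exists (m^-1 w); first by rewrite inE; have := arcG (groupVr Gm) a; rewrite permK.
  by rewrite ob_act ?groupV // (ob_mem wc).
case=> y; rewrite inE => a ->; rewrite mem_SV /=; apply/existsP; exists x.
by rewrite ob_refl /=; apply/existsP; exists y; rewrite ob_refl.
Qed.

Lemma InQE x : [set B in SV | RQ B (ob x)] = InQ x.
Proof.
apply/setP=> C; rewrite inE; apply/idP/imsetP.
  case/andP=> /SVP[c ->] /existsP[u /andP[uc /existsP[w /andP[/obP[m Mm <-] a]]]].
  have Gm := subsetP sMG _ Mm.
  exists (m^-1 u); first by rewrite inE; have := arcG (groupVr Gm) a; rewrite permK.
  by rewrite ob_act ?groupV // (ob_mem uc).
case=> y; rewrite inE => a ->; rewrite mem_SV /=; apply/existsP; exists y.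
by rewrite ob_refl /=; apply/existsP; exists x; rewrite ob_refl.
Qed.

Lemma OutQG g x : g \in G -> OutQ (g x) = ('P^*%act ^~ g) @: OutQ x.
Proof.
move=> Gg; rewrite /OutQ OutG // -!imset_comp; apply: eq_imset => y /=.
by rewrite obG.
Qed.

Lemma InQG g x : g \in G -> InQ (g x) = ('P^*%act ^~ g) @: InQ x.
Proof.
move=> Gg; rewrite /InQ InG // -!imset_comp; apply: eq_imset => y /=.
by rewrite obG.
Qed.

Lemma card_OutQ_const x y : #|OutQ x| = #|OutQ y|.
Proof.
have [g Gg <-] := transG y x; rewrite OutQG // card_imset //; exact: act_inj.
Qed.

Lemma card_InQ_const x y : #|InQ x| = #|InQ y|.
Proof.
have [g Gg <-] := transG y x; rewrite InQG // card_imset //; exact: act_inj.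
Qed.

Lemma card_OutQ_InQ x : #|OutQ x| = #|InQ x|.
Proof.
apply: (@count_rel _ SV RQ).
- by apply/set0Pn; exists (ob x); apply: mem_SV.
- by move=> B /SVP[b ->]; rewrite OutQE; apply: card_OutQ_const.
- by move=> C /SVP[c ->]; rewrite InQE; apply: card_InQ_const.
Qed.

Lemma Out_nonempty x : exists y, arc x y.
Proof.
have : (0 < #|Out x|)%N by rewrite card_Out.
by case/card_gt0P=> y; rewrite inE; exists y.
Qed.

Lemma NB_self x : ob x \in NB x -> NB x = [set ob x].
Proof.
move=> H.
have [y1 a1 e1] : exists2 y1, arc x y1 & ob x = ob y1.
  move: H; rewrite NB_OutIn inE => /orP[] /imsetP[z]; rewrite inE => a E.
    by exists z.
  have [y ay] := Out_nonempty x.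
  have [g Gg [gz gx]] := arc_trans a ay.
  by exists y => //; rewrite -gx -obG // {2}E obG // gz.
apply/setP=> C; rewrite inE; apply/idP/eqP => [|->] //.
rewrite NB_OutIn inE => /orP[] /imsetP[z]; rewrite inE => a ->.
  have [g Gg [gx gy]] := arc_trans a1 a.
  by rewrite -gy -obG // -e1 obG // gx.
have [g Gg [gx gy]] := arc_trans a1 a.
by rewrite -gx -obG // e1 obG // gy.
Qed.

Lemma card_OutQ_le x : (#|OutQ x| <= 2)%N.
Proof. by rewrite -(card_Out x) leq_imset_card. Qed.

Lemma val_ne3 x : val x != 3.
Proof.
rewrite valE; case: (boolP (ob x \in NB x)) => [/NB_self -> | nin].
  by rewrite cards1.
rewrite subn0 NB_OutIn; apply/eqP => H3.
have cU := cardsUI (OutQ x) (InQ x).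
have cle := card_OutQ_le x; have ceq := card_OutQ_InQ x.
have c2 : #|OutQ x| = 2 by lia.
have c1 : #|OutQ x :&: InQ x| = 1%N by lia.
have [C EC] := cards1P (introT eqP c1).
have CI : C \in OutQ x :&: InQ x by rewrite EC set11.
have /imsetP[y] : C \in OutQ x by move: CI; rewrite inE => /andP[].
rewrite inE => ay EC'.
have : (0 < #|OutQ x :\ C|)%N.
  by rewrite (cardsD1 C (OutQ x)) in c2; move: c2; rewrite (setIP CI).1; lia.
case/card_gt0P=> C'; rewrite !inE => /andP[nC' /imsetP[y']]; rewrite inE => ay' EC''.
have [g Gg [gx gy]] := arc_trans ay ay'.
have : 'P^*%act C g \in OutQ x :&: InQ x.
  rewrite -gx OutQG // InQG // inE !(mem_imset _ _ (act_inj _ g)).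
  by rewrite -in_setI.
rewrite EC inE EC' obG // gy -EC'' => /eqP E.
by move: nC'; rewrite E EC' eqxx.
Qed.

Lemma card_NB_le x : (#|NB x| <= 4)%N.
Proof. by apply: leq_trans (leq_imset_card _ _) _; rewrite reg4 ?inE. Qed.

Lemma val4_notin x : val x = 4 -> ob x \notin NB x.
Proof.
rewrite valE => H; apply/negP => H'; move: H; rewrite H'.
by have := card_NB_le x; lia.
Qed.

Lemma val4_neq x w : val x = 4 -> e x w -> ob x != ob w.
Proof.
move=> /val4_notin H exw; apply: contraNneq H => ->.
by apply/imsetP; exists w; rewrite // !inE.
Qed.

Lemma val4_disj x : val x = 4 -> OutQ x :&: InQ x = set0.
Proof.
move=> H; have := val4_notin H; move: H; rewrite valE => H /negbTE nin.
rewrite nin subn0 NB_OutIn in H.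
have cU := cardsUI (OutQ x) (InQ x).
have cle := card_OutQ_le x; have ceq := card_OutQ_InQ x.
apply/eqP; rewrite -cards_eq0; apply/eqP; lia.
Qed.

Lemma SV_act g B : g \in G -> ('P^*%act B g \in SV) = (B \in SV).
Proof.
move=> Gg; apply/SVP/SVP => [[y Ey]|[y ->]]; last by exists (g y); rewrite obG.
exists (g^-1 y); rewrite -obG ?groupV // -Ey.
by rewrite actK.
Qed.

Lemma G_norm_SV : G \subset 'N(SV | 'P^*).
Proof. by apply/subsetP=> g Gg; apply/astabsP => B; apply: SV_act. Qed.

Lemma M_cent_SV : M \subset 'C(SV | 'P^*).
Proof.
apply/subsetP=> m Mm; apply/astabP => B /SVP[y ->]; exact: ob_fix.
Qed.
End Quot.

Lemma nquot_rel_act g B C : g \in G ->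
  nquot_rel e ('P^*%act B g) ('P^*%act C g) = nquot_rel e B C.
Proof.
move=> Gg; rewrite /nquot_rel (inj_eq (act_inj 'P^* g)); congr (_ && _).
apply/existsP/existsP => [[u /andP[/imsetP[u' u'B ->] /existsP[w /andP[/imsetP[w' w'C ->] euw]]]]|].
  by exists u'; rewrite u'B /=; apply/existsP; exists w'; rewrite w'C /= -(autG _ _ Gg).
case=> u /andP[uB /existsP[w /andP[wC euw]]]; exists (g u).
rewrite (mem_setact 'P g uB) /=; apply/existsP; exists (g w).
by rewrite (mem_setact 'P g wC) /= autG.
Qed.

Lemma ob1 (M : {group {perm V}}) x : M :=: 1 -> ob M x = [set x].
Proof.
move=> M1; apply/setP=> y; rewrite inE; apply/obP/eqP => [[m]|<-]; last by exists 1; rewrite ?group1 ?perm1.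
by rewrite M1 => /set1P -> <-; rewrite perm1.
Qed.

Lemma val1 (M : {group {perm V}}) x : M :=: 1 -> val M x = 4.
Proof.
move=> M1; rewrite valE; last by rewrite M1 normal1.
have -> : NB M x = [set [set y] | y in nbhd [set: V] e x].
  by apply: eq_imset => y; rewrite ob1.
rewrite ob1 // (mem_imset _ _ set1_inj) card_imset; last exact: set1_inj.
by rewrite !inE eirr andbF subn0 reg4 ?inE.
Qed.

Lemma val_all4 (M : {group {perm V}}) : M <| G ->
  (exists x, 3 <= val M x)%N -> forall y, val M y = 4.
Proof.
move=> nMG [x H] y; rewrite (val_const nMG y x).
have := val_le4 nMG x; have := val_ne3 nMG x; move: H.
by case: (val M x) => [|[|[|[|[|n]]]]].
Qed.

Section Top.
Variable N : {group {perm V}}.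
Hypotheses (nNG : N <| G) (v4 : forall x, val N x = 4).

Local Notation S := (SV N).
Local Notation modA := ('P^* %% N)%act.

Lemma modE g B : g \in G -> B \in S -> modA B (coset N g) = 'P^*%act B g.
Proof.
move=> Gg /SVP[y ->] /=; rewrite modactE ?(nMG' nNG Gg) ?in_setT //.
by apply/afixP => a /setIP[_ Na]; apply: ob_fix.
Qed.

Lemma quotP q : q \in G / N -> exists2 g, g \in G & q = coset N g.
Proof. by case/morphimP=> g _ Gg ->; exists g. Qed.

Lemma mod_ob g y : g \in G -> modA (ob N y) (coset N g) = ob N (g y).
Proof. by move=> Gg; rewrite modE ?mem_SV // obG. Qed.

Lemma arc0 : arc x0 y0.
Proof. by apply/arcP; exists 1; rewrite ?group1 ?perm1. Qed.

Lemma q_acts : acts_by_auts modA (G / N) S (nquot_rel e).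
Proof.
split; first exact: quotientS (subsetT G).
  by rewrite /acts_on astabs_mod ?M_cent_SV // quotientS // G_norm_SV.
move=> q B C /quotP[g Gg ->] SB SC.
by rewrite !modE // nquot_rel_act.
Qed.

Lemma q_vtrans : [transitive G / N, on S | modA].
Proof.
apply/imsetP; exists (ob N x0); first exact: mem_SV.
apply/setP=> B; apply/idP/imsetP => [/SVP[y ->]|[q /quotP[g Gg ->] ->]].
  have [g Gg <-] := transG x0 y; exists (coset N g); first exact: mem_quotient.
  by rewrite mod_ob.
by rewrite mod_ob // mem_SV.
Qed.

Lemma q_neq u w : e u w -> ob N u != ob N w.
Proof. exact: val4_neq. Qed.

Lemma q_rel u w : e u w -> nquot_rel e (ob N u) (ob N w).
Proof.
move=> euw; rewrite /nquot_rel q_neq //=; apply/existsP; exists u.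
by rewrite ob_refl /=; apply/existsP; exists w; rewrite ob_refl.
Qed.

Definition E0 := [set ob N x0; ob N y0].

Lemma modE0 g : g \in G -> (modA^*)%act E0 (coset N g) = [set ob N (g x0); ob N (g y0)].
Proof.
by move=> Gg; rewrite /= /setact imsetU1 imset_set1 !mod_ob.
Qed.

Lemma q_etrans : [transitive G / N, on gedges S (nquot_rel e) | modA^*].
Proof.
apply/imsetP; exists E0.
  by apply/imset2P; exists (ob N x0) (ob N y0); rewrite ?mem_SV // inE mem_SV /= q_rel.
apply/setP=> E; apply/idP/imsetP => [|[q /quotP[g Gg ->] ->]]; last first.
  rewrite modE0 //; apply/imset2P; exists (ob N (g x0)) (ob N (g y0)); rewrite ?mem_SV //.
  by rewrite inE mem_SV /= q_rel // autG.
case/imset2P=> B C SB; rewrite inE => /andP[SC /andP[_ /existsP[u /andP[uB /existsP[w /andP[wC euw]]]]]] ->.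
move/SVP: SB => [b Eb]; move/SVP: SC => [c Ec].
have Bu : B = ob N u by rewrite Eb; symmetry; apply: ob_mem; rewrite -Eb.
have Cw : C = ob N w by rewrite Ec; symmetry; apply: ob_mem; rewrite -Ec.
rewrite Bu Cw; case/orP: (edge_arc euw) => a.
  have [g Gg [gx gy]] := arc_trans arc0 a.
  by exists (coset N g); rewrite ?mem_quotient // modE0 // gx gy.
have [g Gg [gx gy]] := arc_trans arc0 a.
by exists (coset N g); rewrite ?mem_quotient // modE0 // gx gy setUC.
Qed.

Lemma q_not_arc : ~ arc_transitive modA (G / N) S (nquot_rel e).
Proof.
move=> H.
have r1 := q_rel e0.
have r2 : nquot_rel e (ob N y0) (ob N x0) by apply: q_rel; rewrite esym.
have [q /quotP[g Gg ->] [E1 E2]] := H _ _ _ _ (mem_SV _ _) (mem_SV _ _) r1 (mem_SV _ _) (mem_SV _ _) r2.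
rewrite !mod_ob // in E1 E2.
have : ob N x0 \in OutQ N y0 :&: InQ N y0.
  rewrite inE; apply/andP; split; last by apply/imsetP; exists x0; rewrite // inE arc0.
  rewrite -(OutQE nNG) inE mem_SV /=; apply/existsP; exists (g x0).
  rewrite -E1 ob_refl /=; apply/existsP; exists (g y0); rewrite -E2 ob_refl /=.
  exact: arcG arc0.
by rewrite (val4_disj nNG (v4 y0)) inE.
Qed.

Lemma q_hat : half_arc_transitive modA (G / N) S (nquot_rel e).
Proof. split; [exact: q_acts | exact: q_vtrans | exact: q_etrans | exact: q_not_arc]. Qed.

Lemma q_reg : regular_of S (nquot_rel e) 4.
Proof. by move=> B /SVP[x ->]; apply: v4. Qed.

Lemma q_conn : gconnected S (nquot_rel e).
Proof.
move=> B C /SVP[x ->] /SVP[y ->].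
have /connectP[p] := conn (in_setT x) (in_setT y).
elim: p x => [|z p IH] x /=; first by move=> _ ->; exact: connect0.
case/andP=> /andP[_ /andP[_ exz]] pz ly.
apply: connect_trans (IH z pz ly); apply: connect1.
by rewrite /= !mem_SV q_rel.
Qed.

End Top.

Section Dbl.
Variable N : {group {perm V}}.
Variable M : {group coset_of N}.
Hypotheses (nNG : N <| G) (nM : M <| (G / N)%G).

Local Notation S := (SV N).
Local Notation modA := ('P^* %% N)%act.
Local Notation K := (coset N @*^-1 M)%G.

Lemma sKG : K \subset G.
Proof. by rewrite -(quotientGK nNG); apply: morphpreS; case/andP: nM. Qed.

Lemma nKG : K <| G.
Proof. by rewrite -(quotientGK nNG) cosetpre_normal. Qed.

Lemma sNK : N \subset K.
Proof. exact: sub_cosetpre. Qed.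

Lemma memM m : m \in M -> exists2 k, k \in K & m = coset N k.
Proof.
by rewrite -{1}(cosetpreK M) => /morphimP[k _ Kk ->]; exists k.
Qed.

Lemma cosetK k : k \in K -> coset N k \in M.
Proof. by rewrite inE => /andP[_]; rewrite inE. Qed.

Lemma mod_obK k y : k \in K -> modA (ob N y) (coset N k) = ob N (k y).
Proof.
move=> Kk; rewrite modE ?mem_SV ?(subsetP sKG) //; exact: obG (subsetP sKG _ Kk).
Qed.

Lemma orbM y : orbit modA M (ob N y) = [set ob N (k y) | k : {perm V} in K].
Proof.
apply/setP=> C; apply/imsetP/imsetP => [[m Mm ->]|[k Kk ->]].
  by have [k Kk ->] := memM Mm; exists k; rewrite // mod_obK.
by exists (coset N k); rewrite ?cosetK // mod_obK.
Qed.

Lemma cover_orb y : cover (orbit modA M (ob N y)) = ob K y.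
Proof.
rewrite orbM; apply/setP=> z; apply/bigcupP/obP.
  case=> _ /imsetP[k Kk ->] /obP[n Nn <-].
  by exists (k * n); rewrite ?permM // groupM // (subsetP sNK).
case=> k Kk <-; exists (ob N (k y)); first by apply/imsetP; exists k.
exact: ob_refl.
Qed.

Lemma sMD : M \subset [set: {perm V}] / N.
Proof. by apply: subset_trans (normal_sub nM) (quotientS _ (subsetT G)). Qed.

Lemma orbM_inj y1 y2 : ob K y1 = ob K y2 ->
  orbit modA M (ob N y1) = orbit modA M (ob N y2).
Proof.
move=> E; apply/orbit_in_eqP; first exact: sMD.
have : y1 \in ob K y2 by rewrite -E ob_refl.
case/obP=> k Kk <-; rewrite -mod_obK //; apply: mem_orbit; exact: cosetK.
Qed.

Lemma SSP C : C \in nquot_vertices modA M S -> exists c, C = orbit modA M (ob N c).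
Proof. by case/imsetP=> B /SVP[c ->] ->; exists c. Qed.

Lemma dbl_bound y :
  (#|nbhd (nquot_vertices modA M S) (nquot_rel (nquot_rel e)) (orbit modA M (ob N y))|
     <= val K y)%N.
Proof.
set SS := nquot_vertices modA M S.
have inj : {in SS &, injective cover}.
  move=> C1 C2 /SSP[c1 ->] /SSP[c2 ->]; rewrite !cover_orb; exact: orbM_inj.
have inj2 : {in nbhd SS (nquot_rel (nquot_rel e)) (orbit modA M (ob N y)) &, injective cover}.
  by apply: sub_in2 inj => C; rewrite inE => /andP[].
rewrite -(card_in_imset inj2).
apply: subset_leq_card; apply/subsetP => D /imsetP[C]; rewrite inE => /andP[SC].
case/andP=> neq /existsP[B' /andP[B'B /existsP[C' /andP[C'C]]]].
case/andP=> _ /existsP[u /andP[uB' /existsP[w /andP[wC' euw]]]] ->.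
have [c Ec] := SSP SC.
rewrite Ec cover_orb inE mem_SV /= /nquot_rel; apply/andP; split.
  apply: contra neq => /eqP E; rewrite Ec; apply/eqP; exact: orbM_inj.
apply/existsP; exists u; rewrite -cover_orb; apply/andP; split.
  by apply/bigcupP; exists B'.
apply/existsP; exists w; rewrite -cover_orb -Ec euw andbT.
by apply/bigcupP; exists C'.
Qed.

End Dbl.

Definition Pmax (M : {group {perm V}}) := (M <| G) && [exists x, 3 <= val M x]%N.

Lemma main : exists N : {group {perm V}},
    [/\ N <| G,
        'C_G(nquot_vertices 'P N [set: V] | 'P^*) = N &
        basic ('P^* %% N)%act (G / N)%G
          (nquot_vertices 'P N [set: V]) (nquot_rel e)].
Proof.
have P1 : Pmax 1%G.
  by rewrite /Pmax normal1 /=; apply/existsP; exists x0; rewrite val1.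
have [N maxN _] := maxgroup_exists P1.
have [/andP[nNG ex3] maxP] := maxgroupP maxN.
have v4 := val_all4 nNG (ex_intro _ _ (projT2 (sigW (existsP ex3)))).
exists N; split => //.
  pose K0 := 'C_G(SV N | 'P^*)%G.
  have sNK : N \subset K0 by rewrite subsetI normal_sub // M_cent_SV.
  have nK : K0 <| G := normalGI (G_norm_SV nNG) (astab_normal _ _).
  have obK x : ob K0 x = ob N x.
    apply/eqP; rewrite eqEsubset; apply/andP; split; apply/subsetP => z /obP[k Kk <-].
      case/setIP: Kk => Gk cK.
      rewrite -(astab_act cK (mem_SV N x)); exact: (mem_setact 'P k (ob_refl N x)).
    by apply/obP; exists k => //; apply: (subsetP sNK).
  have SVK : SV K0 = SV N by apply: eq_imset.
  have valK x : val K0 x = val N x by rewrite /val SVK obK.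
  have PK : Pmax K0.
    by rewrite /Pmax nK /=; apply/existsP; exists x0; rewrite valK v4.
  exact: (maxP _ PK sNK).
split; [exact: q_conn | exact: q_reg | exact: q_hat |].
move=> M nM ntM _ /imsetP[B /SVP[y ->] ->].
apply: leq_trans (dbl_bound nNG nM y) _.
have nPK : ~~ Pmax (coset N @*^-1 M)%G.
  apply/negP => PK; have KN := maxP _ PK (sub_cosetpre M).
  by move: ntM; rewrite -(cosetpreK M) KN trivg_quotient eqxx.
move: nPK; rewrite /Pmax (nKG nNG nM) /= negb_exists => /forallP /(_ y).
by rewrite -ltnNge.
Qed.
End S.

Theorem lemma5p1 (V : finType) (e : rel V) (G : {group {perm V}}) :
  symmetric e -> irreflexive e ->
  gconnected [set: V] e -> regular_of [set: V] e 4 ->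
  half_arc_transitive 'P G [set: V] e ->
  exists N : {group {perm V}},
    [/\ N <| G,
        'C_G(nquot_vertices 'P N [set: V] | 'P^*) = N &
        basic ('P^* %% N)%act (G / N)%G
          (nquot_vertices 'P N [set: V]) (nquot_rel e)].
Proof.
move=> esym eirr conn reg4 hat.
have [x _ _] : exists2 x : V, x \in [set: V] & True.
  by case: (hat) => _ /imsetP[x xV _] _ _; exists x.
have : (0 < #|nbhd [set: V] e x|)%N by rewrite reg4 ?inE.
case/card_gt0P => y; rewrite !inE /= => exy.
exact: (main esym eirr conn reg4 hat exy).
Qed.
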